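(* Let $n$ be a positive integer and let $\mathcal{B}$ be a balanced bipartite graph on $2n$ vertices with parts $V_1$ and $V_2$. If $\delta(\mathcal{B})\geq \frac{n}{2}+1$, then $f(\mathcal{B})=n+1$.
   Context: All graphs are finite and simple. A balanced bipartite graph on $2n$ vertices is a bipartite graph with a given bipartition $(V_1,V_2)$ where $|V_1|=|V_2|=n$ (every edge joins a vertex of $V_1$ to a vertex of $V_2$). $\delta(G)$ denotes the minimum degree of $G$. For $S\subseteq V(G)$, $G[S]$ denotes the induced subgraph on $S$. The forest number $f(G)$ is the maximum cardinality of a subset $S\subseteq V(G)$ such that $G[S]$ is a forest (acyclic). *)

(* Defs.v *)
From mathcomp Require Import all_boot.
Set Implicit Arguments. Unset Strict Implicit. Unset Printing Implicit Defensive.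

Definition simple_graph (T : finType) (e : rel T) : Prop :=
  symmetric e /\ irreflexive e.

Definition deg (T : finType) (e : rel T) (v : T) : nat := #|[set u | e v u]|.

Definition balanced_bipartite (T : finType) (e : rel T) (n : nat)
  (V1 V2 : {set T}) : Prop :=
  [/\ [disjoint V1 & V2], V1 :|: V2 = [set: T], #|V1| = n, #|V2| = n &
      forall x y, e x y -> (x \in V1 /\ y \in V2) \/ (x \in V2 /\ y \in V1)].

Definition has_cycle_in (T : finType) (e : rel T) (S : {set T}) : Prop :=
  exists p : seq T, [/\ 2 < size p, uniq p, all (fun x => x \in S) p & cycle e p].

Definition induced_forest (T : finType) (e : rel T) (S : {set T}) : Prop :=
  ~ has_cycle_in e S.

Definition forest_number_is (T : finType) (e : rel T) (k : nat) : Prop :=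
  (exists S : {set T}, induced_forest e S /\ #|S| = k) /\
  (forall S : {set T}, induced_forest e S -> #|S| <= k).

(* Main.v *)
Require Import Defs.
From mathcomp Require Import all_boot.
From mathcomp Require Import zify.

Section G.
Variables (T : finType) (e : rel T).
Hypothesis esym : symmetric e.
Hypothesis eirr : irreflexive e.

Definition dg (x : T) (S : {set T}) : nat := \sum_(w in S) (e x w : nat).
Definition DD (S : {set T}) := \sum_(u in S) dg u S.

Lemma sum_card (S : {set T}) (P : pred T) :
  \sum_(w in S) (P w : nat) = #|[set w in S | P w]|.
Proof.
rewrite -sum1_card big_mkcond /= [RHS]big_mkcond /=.
apply: eq_bigr => w _; rewrite inE.
by case: (w \in S); case: (P w).
Qed.

Lemma dgE x S : dg x S = #|[set w in S | e x w]|.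
Proof. exact: sum_card. Qed.

Lemma dgD1 x v (S : {set T}) : v \in S -> dg x S = e x v + dg x (S :\ v).
Proof.
move=> vS; rewrite /dg (bigD1 v) //=; congr (_ + _).
by apply: eq_bigl => w; rewrite !inE andbC.
Qed.

Lemma D_del v (S : {set T}) : v \in S -> DD S = DD (S :\ v) + 2 * dg v S.
Proof.
move=> vS; rewrite /DD (bigD1 v) //=.
have -> : \sum_(u in S | u != v) dg u S =
          \sum_(u in S :\ v) (e u v + dg u (S :\ v)).
  rewrite [RHS](eq_bigl (fun u => (u \in S) && (u != v))); last first.
    by move=> u; rewrite !inE andbC.
  by apply: eq_bigr => u _; exact: dgD1.
rewrite big_split /=.
have -> : \sum_(u in S :\ v) (e u v : nat) = dg v S.
  rewrite (dgD1 v v S vS) eirr add0n /dg.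
  by apply: eq_bigr => u _; rewrite esym.
lia.
Qed.

Lemma forest_sub (S S' : {set T}) : S' \subset S -> induced_forest e S -> induced_forest e S'.
Proof.
move=> sub hf [p [h1 h2 h3 h4]]; apply: hf; exists p; split=> //.
by apply/allP => x /(allP h3); exact: (subsetP sub).
Qed.

Lemma exists_other x (S : {set T}) z : 2 <= dg x S -> exists2 y, y \in S & e x y && (y != z).
Proof.
move=> h.
case: (boolP [exists y in S, e x y && (y != z)]) => [/exists_inP [y ? ?]|];
  first by exists y.
move/exists_inPn => H; exfalso.
have : #|[set w in S | e x w]| <= 1.
  rewrite -(cards1 z); apply: subset_leq_card; apply/subsetP => w.
  rewrite !inE => /andP[wS exw]; move: (H w wS); rewrite exw /= negbK.
  done.
rewrite -dgE; lia.
Qed.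

Lemma close_cycle (S : {set T}) x p y : path e x p -> uniq (x::p) ->
  all (fun w => w \in S) (x::p) -> e x y -> y != head x p -> y \in x :: p ->
  has_cycle_in e S.
Proof.
move=> hp hu ha exy ynh; rewrite inE => /orP [/eqP yx|].
  by rewrite yx eirr in exy.
case: p hp hu ha ynh => [//|p0 p'] hp hu ha /= ynh yin.
rewrite inE (negbTE ynh) /= in yin.
case/splitPr: yin hp hu ha => p1 p2 hp hu ha.
have E : p0 :: p1 ++ y :: p2 = (p0 :: p1 ++ [:: y]) ++ p2 by rewrite /= -catA.
rewrite E in hp hu ha.
rewrite -cat_cons cat_uniq in hu; case/andP: hu => hu _.
rewrite -cat_cons all_cat in ha; case/andP: ha => ha _.
rewrite cat_path in hp; case/andP: hp => hp _.
exists (x :: p0 :: p1 ++ [:: y]); split => //.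
  by rewrite /= size_cat /=; lia.
rewrite /cycle -cats1 cat_path hp /= last_cat /= esym exy.
done.
Qed.


Lemma path_cycle (S : {set T}) : (forall v, v \in S -> 2 <= dg v S) ->
  forall k x p, #|T| - size (x::p) <= k -> path e x p -> uniq (x::p) ->
  all (fun w => w \in S) (x::p) -> has_cycle_in e S.
Proof.
move=> hS; elim=> [|k IH] x p hk hp hu ha;
  (have xS : x \in S by move: ha => /= /andP[]);
  have [y yS /andP[exy ynz]] := exists_other x S (head x p) (hS x xS);
  (case: (boolP (y \in x :: p)) => yin; first exact: (@close_cycle S _ _ _ hp hu ha exy ynz yin));
  have hu' : uniq (y :: x :: p) by rewrite /= yin.
- have hsz : size (y :: x :: p) <= #|T|.
    by rewrite -(card_uniqP hu'); exact: max_card.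
  move: hk hsz => /=; lia.
- apply: (IH y (x :: p)) => //.
  + have hsz : size (y :: x :: p) <= #|T|.
      by rewrite -(card_uniqP hu'); exact: max_card.
    move: hk hsz => /=; lia.
  + by rewrite /= esym exy hp.
  + by rewrite /= yS.
Qed.

Lemma mindeg_cycle (S : {set T}) : S != set0 ->
  (forall v, v \in S -> 2 <= dg v S) -> has_cycle_in e S.
Proof.
case/set0Pn => x xS hS.
apply: (@path_cycle S hS #|T| x [::]) => //=.
- lia.
- by rewrite xS.
Qed.

Lemma leaf_exists (S : {set T}) : S != set0 -> induced_forest e S ->
  exists2 v, v \in S & dg v S <= 1.
Proof.
move=> hne hf.
case: (boolP [exists v in S, dg v S <= 1]) => [/exists_inP[v ? ?]|/exists_inPn H];
  first by exists v.
exfalso; apply: hf; apply: mindeg_cycle => // v vS.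
by have := H v vS; rewrite -ltnNge.
Qed.

Lemma forest_D k (S : {set T}) : #|S| = k.+1 -> induced_forest e S ->
  DD S + 2 <= 2 * #|S|.
Proof.
elim: k S => [|k IH] S hS hf.
- have hne : S != set0 by rewrite -card_gt0 hS.
  have [v vS hv] := leaf_exists S hne hf.
  have h0 : #|S :\ v| = 0 by move: hS; rewrite (cardsD1 v) vS; lia.
  have E0 := cards0_eq h0.
  rewrite (D_del v S vS) (dgD1 v v S vS) eirr E0 /DD /dg !big_set0 hS.
  done.
- have hne : S != set0 by rewrite -card_gt0 hS.
  have [v vS hv] := leaf_exists S hne hf.
  have h0 : #|S :\ v| = k.+1 by move: hS; rewrite (cardsD1 v) vS; lia.
  have := IH _ h0 (forest_sub S (S :\ v) (subD1set S v) hf).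
  rewrite (D_del v S vS) hS h0; lia.
Qed.

End G.
Section B.
Variables (T : finType) (e : rel T).
Hypothesis esym : symmetric e.

Definition EE (X S : {set T}) :=
  \sum_(u in S) \sum_(w in S) (((u \in X) && e u w) : nat).

Lemma EE_mul X S : EE X S = \sum_(u in S) ((u \in X) * @dg _ e u S).
Proof.
apply: eq_bigr => u _; case: (u \in X) => /=.
  by rewrite mul1n.
by rewrite mul0n big1.
Qed.

Lemma cardSX (X S : {set T}) : #|S :&: X| = \sum_(u in S) (u \in X : nat).
Proof. by rewrite sum_card; congr #|_|; apply/setP => u; rewrite !inE. Qed.

Lemma side_bound (X Y S : {set T}) n :
 (forall x, (x \in Y) = ~~ (x \in X)) -> #|Y| = n ->
 (forall x y, x \in X -> e x y -> y \in Y) ->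
 (forall v, n + 2 <= 2 * deg e v) ->
 #|S :&: X| * (n + 2) <= 2 * EE X S + 2 * #|S :&: X| * (n - #|S :&: Y|).
Proof.
move=> hXY hY hE hdeg.
have hu : forall u, u \in X -> deg e u <= @dg _ e u S + (n - #|S :&: Y|).
  move=> u uX; rewrite /deg dgE.
  have sub : [set w | e u w] \subset [set w in S | e u w] :|: (Y :\: S).
    apply/subsetP => w; rewrite !inE => euw.
    rewrite euw andbT (hE u w uX euw) andbT.
    by case: (w \in S).
  have := subset_leq_card sub; rewrite cardsU cardsD -hY setIC; lia.
rewrite cardSX EE_mul !big_distrr !big_distrl -big_split /=.
apply: leq_sum => u uS; case uX: (u \in X) => //=.
have := hu u uX; have := hdeg u; lia.
Qed.

End B.
Lemma arith (n a b E : nat) : a + b >= n + 2 -> a <= n -> b <= n -> a <= b ->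
  E + E + 2 <= 2 * (a + b) ->
  a * (n + 2) <= 2 * E + 2 * a * (n - b) -> False.
Proof.
move=> h1 h2 h3 h4 h5 h6.
have [c hc] : exists c, n = b + c by exists (n - b); lia.
subst n. rewrite addKn in h6.
have k1 : c * a <= (a - 2) * a by apply: leq_mul; lia.
have k2 : (a - 2) * a <= (a - 2) * b by apply: leq_mul.
have h2a : 2 <= a by lia.
have k3 : (a - 2) * b + 2 * b = a * b by rewrite -mulnDl subnK.
have k4 : a * (b + c + 2) = a * b + c * a + 2 * a by rewrite !mulnDr (mulnC a c) (mulnC a 2).
have k5 : 2 * a * c = 2 * (c * a) by rewrite -mulnA (mulnC a c).
lia.
Qed.

Theorem theorem1 (T : finType) (e : rel T) (n : nat) (V1 V2 : {set T}) :
  0 < n ->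
  simple_graph e ->
  balanced_bipartite e n V1 V2 ->
  (forall v : T, n + 2 <= 2 * deg e v) ->
  forest_number_is e n.+1.
Proof.
move=> n0 [esym eirr] [hdis hU h1 h2 hb] hdeg.
have hV : forall x, (x \in V2) = ~~ (x \in V1).
  move=> x; move: (disjoint_setI0 hdis) => /setP /(_ x); rewrite !inE.
  have : x \in V1 :|: V2 by rewrite hU inE.
  by rewrite inE; case: (x \in V1); case: (x \in V2).
have hV' : forall x, (x \in V1) = ~~ (x \in V2) by move=> x; rewrite hV negbK.
have hE12 : forall x y, x \in V1 -> e x y -> y \in V2.
  move=> x y xV exy; case: (hb x y exy) => [[]|[a _]] //.
  by rewrite hV xV in a.
have hE21 : forall x y, x \in V2 -> e x y -> y \in V1.
  move=> x y xV exy; case: (hb x y exy) => [[a _]|[]] //.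
  by rewrite hV' xV in a.
split.
- have : 0 < #|V2| by rewrite h2.
  rewrite card_gt0 => /set0Pn [v vV2].
  exists (v |: V1); split; last first.
    by rewrite cardsU1 hV' negbK vV2 h1.
  move=> [p [hs hu ha hc]].
  have hnv : v \notin behead (rot (index v p) p).
    case: (boolP (v \in p)) => vp.
      move: hu; rewrite -(rot_uniq (index v p)) (rot_index vp) /=.
      by case/andP.
    rewrite rot_oversize ?memNindex //.
    by apply/negP => /mem_behead; rewrite (negbTE vp).
  have [h1' h2' h3'] : [/\ 2 < size (rot (index v p) p),
      all (fun w => w \in v |: V1) (rot (index v p) p) &
      cycle e (rot (index v p) p)].
    rewrite size_rot rot_cycle hs hc; split => //.
    by apply/allP => y; rewrite mem_rot; exact: (allP ha).
  move: hnv h1' h2' h3'; case: (rot _ _) => [|x [|y [|z r]]] //=.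
  rewrite !inE !negb_or => /andP[vy /andP[vz _]] _ /and4P[_ yS zS _].
  case/andP => _ /andP[eyz _].
  rewrite (eq_sym y) (negbTE vy) /= in yS.
  rewrite (eq_sym z) (negbTE vz) /= in zS.
  by have := hE12 _ _ yS eyz; rewrite hV zS.
- move=> S hf; rewrite leqNgt; apply/negP => hlt.
  have hab : #|S :&: V1| + #|S :&: V2| = #|S|.
    rewrite -(cardsID V1 S); congr (_ + _).
    by apply: eq_card => x; rewrite !inE hV andbC.
  have ha : #|S :&: V1| <= n by rewrite -h1; apply: subset_leq_card; exact: subsetIr.
  have hb' : #|S :&: V2| <= n by rewrite -h2; apply: subset_leq_card; exact: subsetIr.
  have hD := @forest_D T e esym eirr (#|S|.-1) S ltac:(lia) hf.
  have hsplit : DD T e S = EE T e V1 S + EE T e V2 S.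
    rewrite /DD /EE -big_split; apply: eq_bigr => u _.
    rewrite /dg -big_split; apply: eq_bigr => w _.
    by rewrite hV; case: (u \in V1); case: (e u w).
  have heq : EE T e V1 S = EE T e V2 S.
    rewrite /EE exchange_big; apply: eq_bigr => x _; apply: eq_bigr => y _.
    congr nat_of_bool; rewrite [e x y]esym.
    case exy: (e y x); last by rewrite !andbF.
    rewrite !andbT.
    case: (hb _ _ exy) => [[a b]|[a b]].
      by rewrite a b.
    by move: a b; rewrite !hV; case: (y \in V1); case: (x \in V1).
  have s1 := @side_bound T e V1 V2 S n hV h2 hE12 hdeg.
  have s2 := @side_bound T e V2 V1 S n hV' h1 hE21 hdeg.
  move: hD s1 s2; rewrite hsplit -heq => hD s1 s2.
  case: (leqP #|S :&: V1| #|S :&: V2|) => hab2.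
  + apply: (arith _ _ _ _ _ ha hb' hab2 _ s1); lia.
  + have hD' : EE T e V1 S + EE T e V1 S + 2 <= 2 * (#|S :&: V2| + #|S :&: V1|) by lia.
    apply: (arith _ _ _ _ _ hb' ha (ltnW hab2) hD' s2); lia.
Qed.
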